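(* Let $A$ and $B$ be cofinite directed posets of infinite height. Then the poset of strictly increasing functions $B\to A$, ordered by $\alpha'\geq\alpha$ iff $\alpha'(b)\geq\alpha(b)$ for all $b\in B$, is directed and of infinite height.
   Context: A poset is cofinite if for every $x$ the set $\{z\mid z\le x\}$ is finite; directed if it is nonempty and any two elements have a common upper bound; of infinite height if for every $a$ there is $a'$ with $a<a'$. *)

(* Defs.v *)
From mathcomp Require Import all_boot all_order.
Set Implicit Arguments. Unset Strict Implicit. Unset Printing Implicit Defensive.
Import Order.Theory.
Local Open Scope order_scope.

Definition cofinite_poset d (T : porderType d) : Prop :=
  forall x : T, exists s : seq T, forall z : T, z <= x -> z \in s.

(* Generic poset notions, stated for an arbitrary relation le (with strict
   order lt := le and not equal), so they can be applied to the pointwise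
   order on functions. *)
Definition directed_rel (X : Type) (le : X -> X -> Prop) : Prop :=
  (exists x : X, True) /\ forall x y : X, exists z : X, le x z /\ le y z.

Definition infinite_height_rel (X : Type) (le : X -> X -> Prop) : Prop :=
  forall a : X, exists a' : X, le a a' /\ a <> a'.

Definition directed_poset d (T : porderType d) : Prop :=
  directed_rel (fun x y : T => x <= y).

Definition infinite_height_poset d (T : porderType d) : Prop :=
  forall a : T, exists a' : T, a < a'.

Definition strictly_increasing dA dB (A : porderType dA) (B : porderType dB)
  (f : B -> A) : Prop := forall b b' : B, b < b' -> f b < f b'.

Definition incr_fun dA dB (A : porderType dA) (B : porderType dB) :=
  { f : B -> A | strictly_increasing f }.

Definition incr_le dA dB (A : porderType dA) (B : porderType dB)
  (f g : incr_fun A B) : Prop := forall b : B, proj1_sig f b <= proj1_sig g b.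

(* Main.v *)
Require Import Defs.
From mathcomp Require Import all_boot all_order.
From Stdlib Require Import ClassicalEpsilon.
Import Order.Theory.
Local Open Scope order_scope.

Definition Hf (A B : Type) (next : seq A -> A) (f g : B -> A) (pl : B -> seq B) :=
  fix H (n : nat) (b : B) {struct n} : A :=
  match n with
  | 0 => next [::]
  | n'.+1 => next (f b :: g b :: map (H n') (pl b))
  end.

Lemma ub_seq dA (A : porderType dA) : directed_poset A -> infinite_height_poset A ->
  forall l : seq A, exists u, forall x, x \in l -> x < u.
Proof.
move=> [[a0 _] dir] ih.
have H : forall l : seq A, exists u, forall x, x \in l -> x <= u.
  elim=> [|x l [u Hu]]; first by exists a0.
  have [z [xz uz]] := dir x u.
  exists z => y; rewrite inE => /orP [/eqP -> //|yl].
  exact: le_trans (Hu _ yl) uz.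
move=> l; have [u Hu] := H l; have [u' uu'] := ih u.
by exists u' => x /Hu xu; apply: le_lt_trans xu uu'.
Qed.

Lemma key dA dB (A : porderType dA) (B : porderType dB) :
  directed_poset A -> infinite_height_poset A -> cofinite_poset B ->
  forall f g : B -> A, exists h : B -> A, strictly_increasing h /\
     forall b, f b < h b /\ g b < h b.
Proof.
move=> dA' iA cB f g.
pose next (l : seq A) := proj1_sig (constructive_indefinite_description _ (@ub_seq _ A dA' iA l)).
have nextP : forall l x, x \in l -> x < next l.
  by move=> l; rewrite /next; case: constructive_indefinite_description.
pose sB (b : B) := proj1_sig (constructive_indefinite_description _ (cB b)).
have sBP : forall b z, z <= b -> z \in sB b.
  by move=> b; rewrite /sB; case: constructive_indefinite_description.
pose pl (b : B) := filter (fun z => z < b) (sB b).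
have plP : forall b z, (z \in pl b) = (z < b).
  move=> b z; rewrite mem_filter; apply/andP/idP => [[]//|zb].
  by split => //; apply: sBP; apply: ltW.
pose D (b : B) := undup (filter (fun z => z <= b) (sB b)).
pose rk b := size (D b).
have DP : forall b z, (z \in D b) = (z <= b).
  move=> b z; rewrite mem_undup mem_filter; apply/andP/idP => [[]//|zb].
  by split => //; apply: sBP.
have rk_pos : forall b, (0 < rk b)%N.
  by move=> b; rewrite /rk; case E: (D b) => //; have := DP b b; rewrite E lexx.
have rk_lt : forall z b, z < b -> (rk z < rk b)%N.
  move=> z b zb.
  have U : uniq (b :: D z).
    rewrite /= undup_uniq andbT DP; apply/negP => bz.
    by have := lt_le_trans zb bz; rewrite ltxx.
  have S : {subset b :: D z <= D b}.
    move=> y; rewrite inE => /orP [/eqP ->|]; first by rewrite DP.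
    by rewrite !DP => yz; apply: le_trans yz (ltW zb).
  by have := uniq_leq_size U S.
pose H := @Hf A B next f g pl.
have stab : forall k n b, rk b = k -> (k <= n)%N -> H n b = H k b.
  elim/ltn_ind => k IH n b rkb kn.
  case: k IH rkb kn => [|k] IH rkb kn; first by have := rk_pos b; rewrite rkb.
  case: n kn => [//|n] kn /=.
  rewrite /H /=; congr (next (_ :: _ :: _)); apply/eq_in_map => z; rewrite plP => zb.
  have zk : (rk z <= k)%N by have := rk_lt _ _ zb; rewrite rkb ltnS.
  change (H n z = H k z); rewrite (IH (rk z) _ n z) //; last by apply: leq_trans zk kn.
  by rewrite (IH (rk z) _ k z) //; apply: leq_ltn_trans zk _.
exists (fun b => H (rk b) b); split.
  move=> z b zb.
  have := rk_pos b; case E: (rk b) => [//|k] _ /=.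
  apply: nextP; rewrite !inE; apply/orP; right; apply/orP; right.
  have zk : (rk z <= k)%N by have := rk_lt _ _ zb; rewrite E ltnS.
  rewrite -(stab (rk z) k z) //; apply: map_f; by rewrite plP.
move=> b; have := rk_pos b; case: (rk b) => [//|k] _ /=.
by split; apply: nextP; rewrite !inE eqxx ?orbT.
Qed.

Theorem lemma3p17 (dA dB : Order.disp_t) (A : porderType dA) (B : porderType dB) :
  cofinite_poset A -> directed_poset A -> infinite_height_poset A ->
  cofinite_poset B -> directed_poset B -> infinite_height_poset B ->
  directed_rel (@incr_le _ _ A B) /\ infinite_height_rel (@incr_le _ _ A B).
Proof.
move=> _ dA' iA cB [[b0 _] _] _.
have [a0 _] := dA'.1.
split; [split|].
- have [h [hi _]] := @key _ _ A B dA' iA cB (fun _ => a0) (fun _ => a0).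
  by exists (exist _ h hi).
- move=> [f fi] [g gi].
  have [h [hi hp]] := @key _ _ A B dA' iA cB f g.
  exists (exist _ h hi); split => b /=; apply: ltW; by case: (hp b).
- move=> [f fi].
  have [h [hi hp]] := @key _ _ A B dA' iA cB f f.
  exists (exist _ h hi); split => [b /=|E]; first by apply: ltW; case: (hp b).
  have : f b0 = h b0 by move: E => [->].
  by move=> e; have := (hp b0).1; rewrite e ltxx.
Qed.
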